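(* Let $\mathcal{V}$ be the vector space of all complex sequences $\vec{a}=(a_n)_{n\ge 0}$, and let $C:\mathcal{V}\to\mathcal{V}$ be the Cesàro matrix acting by matrix multiplication, $(C\vec a)_N=\frac{1}{N+1}\sum_{j=0}^{N}a_j$ for $N\ge 0$. For each $m\in\mathbb{N}_0=\{0,1,2,\dots\}$ let $\vec b_m\in\mathcal{V}$ be the sequence whose $n$-th entry is $0$ for $0\le n<m$ and $\binom{n}{m}$ for $n\ge m$ (i.e. $\vec b_m=(0,\dots,0,\binom{m}{m},\binom{m+1}{m},\binom{m+2}{m},\dots)$ with $m$ leading zeros). Then for each $m\in\mathbb{N}_0$, $$C\vec b_m=\frac{1}{m+1}\vec b_m.$$ Moreover, each of these eigenspaces (the eigenspace of $C$ on $\mathcal{V}$ for the eigenvalue $\frac{1}{m+1}$) is one dimensional.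
   Context: The Cesàro matrix is the infinite lower-triangular matrix $C=[c_{ij}]_{i,j\ge 0}$ with $c_{ij}=\frac{1}{i+1}$ for $j\le i$ and $c_{ij}=0$ for $j>i$; since it is lower triangular, $C\vec a$ is defined for every complex sequence $\vec a$. *)

(* Defs.v *)
From HB Require Import structures.
From mathcomp Require Import all_boot all_order all_algebra.
From mathcomp Require Import complex.
From mathcomp Require Import reals.
Set Implicit Arguments. Unset Strict Implicit. Unset Printing Implicit Defensive.
Import Order.TTheory GRing.Theory Num.Theory.
Local Open Scope ring_scope.

Definition cesaro {C : fieldType} (a : nat -> C) : nat -> C :=
  fun N => (N.+1%:R)^-1 * \sum_(j < N.+1) a j.

Definition bvec {C : fieldType} (m : nat) : nat -> C :=
  fun n => if (n < m)%N then 0 else ('C(n, m))%:R.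

Definition sscale {C : fieldType} (c : C) (a : nat -> C) : nat -> C :=
  fun n => c * a n.

Definition cesaro_eigenspace {C : fieldType} (lam : C) : (nat -> C) -> Prop :=
  fun a => cesaro a = sscale lam a.

Definition one_dimensional {C : fieldType} (S : (nat -> C) -> Prop) : Prop :=
  exists v : nat -> C, v <> (fun _ => 0) /\
    forall a, S a <-> exists c : C, a = sscale c v.

(* Main.v *)
Require Import Defs.
From HB Require Import structures.
From mathcomp Require Import all_boot all_order all_algebra.
From mathcomp Require Import complex.
From mathcomp Require Import reals.
From Stdlib Require Import FunctionalExtensionality.
Import GRing.Theory Num.Theory.
Local Open Scope ring_scope.

Section Aux.
Variable F : numFieldType.

Lemma bvecE m n : (bvec m n : F) = ('C(n, m))%:R.
Proof. by rewrite /bvec; case: ltnP => // h; rewrite bin_small. Qed.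

Lemma sum_bin_nat m N : (\sum_(j < N.+1) 'C(j, m) = 'C(N.+1, m.+1))%N.
Proof.
elim: N => [|N IH]; first by rewrite big_ord1; case: m => [|[|m]].
by rewrite big_ord_recr /= IH [in RHS]binS addnC.
Qed.

Lemma natS_neq0 n : (n.+1%:R : F) != 0.
Proof. by rewrite pnatr_eq0. Qed.

Lemma cesaro_bvec m : cesaro (bvec m : nat -> F) = sscale (m.+1%:R)^-1 (bvec m).
Proof.
apply: functional_extensionality => N; rewrite /cesaro /sscale.
under eq_bigr => j _ do rewrite bvecE.
rewrite -natr_sum sum_bin_nat bvecE.
have H : (N.+1%:R * ('C(N, m))%:R = m.+1%:R * ('C(N.+1, m.+1))%:R :> F).
  by rewrite -!natrM (mul_bin_diag N.+1 m).
have -> : (('C(N.+1, m.+1))%:R : F) = (m.+1%:R)^-1 * (N.+1%:R * ('C(N, m))%:R).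
  by rewrite H mulKf ?natS_neq0.
by rewrite mulrCA mulKf ?natS_neq0.
Qed.

Lemma eigen_rec m (a : nat -> F) :
  cesaro a = sscale (m.+1%:R)^-1 a ->
  forall N, m.+1%:R * \sum_(j < N.+1) a j = N.+1%:R * a N.
Proof.
move=> Ea N; have := congr1 (fun f => f N) Ea; rewrite /cesaro /sscale => E.
have -> : \sum_(j < N.+1) a j = N.+1%:R * ((m.+1%:R)^-1 * a N).
  by rewrite -E mulVKf ?natS_neq0.
by rewrite mulrCA mulVKf ?natS_neq0.
Qed.

Lemma eigen_unique m (a : nat -> F) :
  cesaro a = sscale (m.+1%:R)^-1 a ->
  forall n, a n = a m * ('C(n, m))%:R.
Proof.
move=> /eigen_rec E.
have R0 : (m%:R * a 0%N = 0).
  have := E 0%N; rewrite big_ord1 mulr1n mul1r => h.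
  move: h; rewrite -natr1 mulrDl mul1r => h.
  by apply: (addIr (a 0%N)); rewrite add0r; exact: h.
have RS n : (n.+1%:R * a n = (n.+1%:R - m%:R) * a n.+1).
  have e1 := E n; have e2 := E n.+1.
  rewrite big_ord_recr /= mulrDr e1 in e2.
  apply: (addIr (m.+1%:R * a n.+1)); rewrite e2 -mulrDl; congr (_ * _).
  by rewrite -natr1 -(natr1 m) addrA subrK.
elim=> [|n IH].
  case: m R0 {E RS} => [|m] R0; first by rewrite bin0 mulr1.
  rewrite bin0n /= mulr0; move/eqP: R0.
  by rewrite mulf_eq0 pnatr_eq0 /= => /eqP.
have [->|nm] := eqVneq n.+1 m; first by rewrite binn mulr1.
have nz : (n.+1%:R - m%:R : F) != 0 by rewrite subr_eq0 eqr_nat.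
apply: (mulfI nz); rewrite -RS IH [LHS]mulrCA [RHS]mulrCA; congr (_ * _).
have [le|lt] := leqP m n.+1.
  by rewrite -natrB // -!natrM -mul_bin_down.
by rewrite !bin_small ?mulr0 // ltnW.
Qed.

End Aux.

Theorem mainTheorem1 (R : realType) :
  (forall m : nat,
     cesaro (bvec m : nat -> R[i]) = sscale (m.+1%:R)^-1 (bvec m)) /\
  (forall m : nat,
     one_dimensional (cesaro_eigenspace ((m.+1%:R)^-1 : R[i]))).
Proof.
split; first exact: cesaro_bvec.
move=> m; exists (bvec m); split.
  move=> /(congr1 (fun f => f m)); rewrite bvecE binn => /eqP.
  by rewrite oner_eq0.
move=> a; split.
  move=> Ea; exists (a m); apply: functional_extensionality => n.
  by rewrite /sscale bvecE (@eigen_unique _ m a Ea n).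
case=> c ->; rewrite /cesaro_eigenspace; apply: functional_extensionality => N.
rewrite /cesaro /sscale.
rewrite -(big_morph _ (mulrDr c) (mulr0 c)).
rewrite mulrCA [RHS]mulrCA; congr (_ * _).
by have := congr1 (fun f => f N) (cesaro_bvec R[i] m); rewrite /cesaro /sscale.
Qed.
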